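(* For every nonnegative integer $k$, the following identity of formal power series in an indeterminate $z$ holds (the paper writes $z=[t]_q$): $$\sum_{n\ge 0}W_{m,r}[n,k]_q\,\frac{z^{n}}{[n]_q!}=\frac{1}{[k]_{q^m}!\,[m]_q^{k}}\sum_{j=0}^{k}(-1)^{k-j}\,q^{m\binom{k-j}{2}}\begin{bmatrix}k\\ j\end{bmatrix}_{q^m}e_q\big([jm+r]_q\,z\big),$$ where $e_q(x)=\sum_{n\ge0}\frac{x^n}{[n]_q!}$ is the $q$-exponential function.
   Context: Fix a real number $q>0$ with $q\neq 1$, a positive integer $m$ and a complex number $r$. For complex $x$ put $q^x=e^{x\ln q}$ and $[x]_q=\frac{1-q^x}{1-q}$. For $p>0$, $p\ne 1$ and integers $0\le j\le k$: $[i]_p=\frac{1-p^i}{1-p}$, $[k]_p!=\prod_{i=1}^{k}[i]_p$ (with $[0]_p!=1$), and $\begin{bmatrix}k\\ j\end{bmatrix}_p=\frac{[k]_p!}{[j]_p!\,[k-j]_p!}$. The numbers $W_{m,r}[n,k]_q$ (a $q$-analogue of the $r$-Whitney numbers of the second kind), for integers $n,k$, are defined by $W_{m,r}[0,0]_q=1$, $W_{m,r}[n,k]_q=0$ whenever $n<k$ or $n<0$ or $k<0$, and, for $n\ge 1$ and $0\le k\le n$, $$W_{m,r}[n,k]_q=q^{m(k-1)+r}\,W_{m,r}[n-1,k-1]_q+[mk+r]_q\,W_{m,r}[n-1,k]_q .$$ *)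

(* Defs.v *)
From Stdlib Require Import Reals.
Open Scope R_scope.

Definition Cx : Type := (R * R)%type.
Definition RtoC (x : R) : Cx := (x, 0).
Definition Cadd (a b : Cx) : Cx := (fst a + fst b, snd a + snd b).
Definition Copp (a : Cx) : Cx := (- fst a, - snd a).
Definition Cmul (a b : Cx) : Cx :=
  (fst a * fst b - snd a * snd b, fst a * snd b + snd a * fst b).
Definition Cinv (a : Cx) : Cx :=
  let d := fst a * fst a + snd a * snd a in (fst a / d, - snd a / d).
Definition Cdiv (a b : Cx) : Cx := Cmul a (Cinv b).
Fixpoint Cpow (a : Cx) (n : nat) : Cx :=
  match n with O => RtoC 1 | S n' => Cmul a (Cpow a n') end.
Fixpoint Csum (f : nat -> Cx) (k : nat) : Cx :=
  match k with O => f O | S k' => Cadd (Csum f k') (f k) end.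

(* q^x = e^{x ln q} for real q > 0 and complex x = a + i b:
   e^{a ln q} (cos (b ln q) + i sin (b ln q)) *)
Definition Cexpq (q : R) (x : Cx) : Cx :=
  (exp (fst x * ln q) * cos (snd x * ln q),
   exp (fst x * ln q) * sin (snd x * ln q)).

Definition qbrC (q : R) (x : Cx) : Cx :=
  Cdiv (Cadd (RtoC 1) (Copp (Cexpq q x))) (RtoC (1 - q)).

Definition qint (p : R) (i : nat) : R := (1 - p ^ i) / (1 - p).
Fixpoint qfact (p : R) (k : nat) : R :=
  match k with O => 1 | S k' => qint p k * qfact p k' end.
Definition qbinom (p : R) (k j : nat) : R :=
  qfact p k / (qfact p j * qfact p (k - j)).

Definition choose2 (n : nat) : nat := (n * (n - 1) / 2)%nat.

(* W_{m,r}[n,k]_q, with W[0,0]=1, W[n,k]=0 for n<k (and negative indices),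
   W[n,k] = q^{m(k-1)+r} W[n-1,k-1] + [mk+r]_q W[n-1,k].
   The fixpoint automatically yields 0 whenever k > n. *)
Fixpoint Wq (q : R) (m : nat) (r : Cx) (n k : nat) : Cx :=
  match n with
  | O => match k with O => RtoC 1 | S _ => RtoC 0 end
  | S n' =>
      match k with
      | O => Cmul (qbrC q (Cadd (RtoC (INR m * INR 0)) r)) (Wq q m r n' O)
      | S k' =>
          Cadd
            (Cmul (Cexpq q (Cadd (RtoC (INR m * (INR k - 1))) r))
                  (Wq q m r n' k'))
            (Cmul (qbrC q (Cadd (RtoC (INR m * INR k)) r)) (Wq q m r n' k))
      end
  end.

(* Main.v *)
Require Import Defs.
From Stdlib Require Import Reals Lra Lia Ring Field.
Open Scope R_scope.

Definition Csub (a b : Cx) : Cx := Cadd a (Copp b).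

Lemma Cx_ring : ring_theory (RtoC 0) (RtoC 1) Cadd Cmul Csub Copp (@eq Cx).
Proof.
  constructor; intros; repeat match goal with a : Cx |- _ => destruct a end;
  unfold Cadd, Cmul, Csub, Copp, RtoC; simpl; try reflexivity; f_equal; ring.
Qed.
Add Ring CxRing : Cx_ring.

Lemma RtoC_mul a b : RtoC (a * b) = Cmul (RtoC a) (RtoC b).
Proof. unfold RtoC, Cmul; simpl; f_equal; ring. Qed.
Lemma RtoC_add a b : RtoC (a + b) = Cadd (RtoC a) (RtoC b).
Proof. unfold RtoC, Cadd; simpl; f_equal; ring. Qed.
Lemma RtoC_sub a b : RtoC (a - b) = Csub (RtoC a) (RtoC b).
Proof. unfold RtoC, Csub, Cadd, Copp; simpl; f_equal; ring. Qed.

Lemma Cdiv_real z d : d <> 0 -> Cdiv z (RtoC d) = Cmul (RtoC (/ d)) z.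
Proof.
  intro H; destruct z as [x y]; unfold Cdiv, Cinv, Cmul, RtoC; simpl.
  f_equal; field; auto.
Qed.

Lemma Cexpq_add q a z :
  Cexpq q (Cadd (RtoC a) z) = Cmul (RtoC (exp (a * ln q))) (Cexpq q z).
Proof.
  destruct z as [x y]; unfold Cexpq, Cadd, Cmul, RtoC; simpl.
  rewrite Rplus_0_l, Rmult_plus_distr_r, exp_plus. f_equal; ring.
Qed.

Lemma qbrC_eq q z : 1 - q <> 0 ->
  qbrC q z = Cmul (RtoC (/ (1 - q))) (Csub (RtoC 1) (Cexpq q z)).
Proof. intro H; unfold qbrC; rewrite Cdiv_real by auto. reflexivity. Qed.

Lemma exp_INR q n : 0 < q -> exp (INR n * ln q) = q ^ n.
Proof. intro H; rewrite <- Rpower_pow by auto; reflexivity. Qed.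

Lemma Csum_ext f g k : (forall j, (j <= k)%nat -> f j = g j) -> Csum f k = Csum g k.
Proof.
  induction k; intro H; simpl. apply H; lia.
  rewrite IHk by (intros; apply H; lia). rewrite H by lia. reflexivity.
Qed.
Lemma Csum_scal c f k : Csum (fun j => Cmul c (f j)) k = Cmul c (Csum f k).
Proof. induction k; simpl. reflexivity. rewrite IHk. ring. Qed.
Lemma Csum_add f g k : Csum (fun j => Cadd (f j) (g j)) k = Cadd (Csum f k) (Csum g k).
Proof. induction k; simpl. reflexivity. rewrite IHk. ring. Qed.

Fixpoint rsum (f : nat -> R) (k : nat) : R :=
  match k with O => f O | S k' => rsum f k' + f k end.
Lemma Csum_RtoC f k : Csum (fun j => RtoC (f j)) k = RtoC (rsum f k).
Proof. induction k; simpl. reflexivity. rewrite IHk, RtoC_add. reflexivity. Qed.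
Lemma rsum_ext f g k : (forall j, (j <= k)%nat -> f j = g j) -> rsum f k = rsum g k.
Proof.
  induction k; intro H; simpl. apply H; lia.
  rewrite IHk by (intros; apply H; lia). rewrite H by lia. reflexivity.
Qed.
Lemma rsum_shift f k : rsum f (S k) = f O + rsum (fun i => f (S i)) k.
Proof. induction k. simpl. ring. change (rsum f (S (S k))) with (rsum f (S k) + f (S (S k))).
  rewrite IHk. simpl. ring. Qed.
Lemma rsum_lin a b f g k : rsum (fun j => a * f j + b * g j) k = a * rsum f k + b * rsum g k.
Proof. induction k; simpl. ring. rewrite IHk. ring. Qed.

Lemma pow_ne1 x i : 0 < x -> x <> 1 -> (0 < i)%nat -> x ^ i <> 1.
Proof.
  intros H0 H1 Hi. destruct (Rlt_or_le x 1) as [H|H].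
  - pose proof (pow_lt_1_compat x i (conj (Rlt_le _ _ H0) H) Hi). lra.
  - assert (1 < x) by lra. pose proof (Rlt_pow_R1 x i H2 Hi). lra.
Qed.

Lemma qfact_nz p n : 0 < p -> p <> 1 -> qfact p n <> 0.
Proof.
  intros H0 H1; induction n; simpl. lra.
  apply Rmult_integral_contrapositive; split; auto.
  unfold qint. pose proof (pow_ne1 p (S n) H0 H1 ltac:(lia)).
  unfold Rdiv. apply Rmult_integral_contrapositive; split. lra.
  apply Rinv_neq_0_compat. lra.
Qed.

Lemma choose2_S t : choose2 (S t) = (choose2 t + t)%nat.
Proof.
  unfold choose2. replace (S t * (S t - 1))%nat with (t * (t - 1) + t * 2)%nat
    by (destruct t; simpl; lia).
  apply Nat.div_add; lia.
Qed.

Definition cc q m k j := (-1) ^ (k - j) * q ^ (m * choose2 (k - j)) * qbinom (q ^ m) k j.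
Definition DD q m k := qfact (q ^ m) k * qint q m ^ k.

Lemma rec_real q m k' j : 0 < q -> q <> 1 -> (0 < m)%nat -> (j <= k')%nat ->
  cc q m (S k') j * / (1 - q) * ((q ^ m) ^ (S k') - (q ^ m) ^ j) =
  DD q m (S k') * (q ^ m) ^ k' * / DD q m k' * cc q m k' j.
Proof.
  intros Hq0 Hq1 Hm Hj.
  assert (Hp0 : 0 < q ^ m) by (apply pow_lt; auto).
  assert (Hp1 : q ^ m <> 1) by (apply pow_ne1; auto).
  destruct (Nat.le_exists_sub j k' Hj) as [t [-> _]].
  rewrite Nat.add_comm.
  unfold cc, qbinom, DD. rewrite !pow_mult.
  replace (S (j + t) - j)%nat with (S t) by lia.
  replace (j + t - j)%nat with t by lia.
  rewrite choose2_S.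
  simpl qfact. simpl pow. rewrite !pow_add. unfold qint.
  set (p := q ^ m) in *.
  pose proof (qfact_nz p j Hp0 Hp1). pose proof (qfact_nz p t Hp0 Hp1).
  pose proof (qfact_nz p (j+t) Hp0 Hp1).
  pose proof (pow_ne1 p (S t) Hp0 Hp1 ltac:(lia)). simpl in H2.
  assert ((1 - p) / (1 - q) <> 0). { unfold Rdiv.
    apply Rmult_integral_contrapositive; split. lra. apply Rinv_neq_0_compat; lra. }
  assert (((1 - p) / (1 - q)) ^ j <> 0) by (apply pow_nonzero; auto).
  assert (((1 - p) / (1 - q)) ^ t <> 0) by (apply pow_nonzero; auto).
  replace (p ^ S t) with (p * p ^ t) by (simpl; ring).
  replace (p ^ S (j + t)) with (p * (p ^ j * p ^ t)) by (simpl; rewrite pow_add; ring).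
  clearbody p. generalize dependent (((1 - p) / (1 - q)) ^ j). generalize dependent (((1 - p) / (1 - q)) ^ t). intros. generalize dependent (p ^ t); generalize dependent (p ^ j); intros.
  field. repeat split; lra.
Qed.

Lemma cc_S0 q m k : 0 < q -> q <> 1 -> (0 < m)%nat ->
  cc q m (S k) 0 = - (q ^ m) ^ k * cc q m k 0.
Proof.
  intros Hq0 Hq1 Hm.
  assert (Hp0 : 0 < q ^ m) by (apply pow_lt; auto).
  assert (Hp1 : q ^ m <> 1) by (apply pow_ne1; auto).
  unfold cc, qbinom. rewrite !pow_mult. rewrite !Nat.sub_0_r, choose2_S.
  set (p := q ^ m) in *. clearbody p.
  pose proof (qfact_nz p k Hp0 Hp1). pose proof (qfact_nz p (S k) Hp0 Hp1).
  rewrite pow_add. simpl qfact. simpl pow at 1. 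
  assert (qint p (S k) <> 0) by (intro h; apply H0; simpl; rewrite h; ring).
  field. auto.
Qed.

Lemma cc_diag q m k : 0 < q -> q <> 1 -> (0 < m)%nat -> cc q m k k = 1.
Proof.
  intros Hq0 Hq1 Hm.
  assert (Hp0 : 0 < q ^ m) by (apply pow_lt; auto).
  assert (Hp1 : q ^ m <> 1) by (apply pow_ne1; auto).
  pose proof (qfact_nz (q ^ m) k Hp0 Hp1).
  unfold cc, qbinom. rewrite Nat.sub_diag. unfold choose2. simpl.
  rewrite Nat.mul_0_r. simpl. field. auto.
Qed.

Lemma cc_pascal q m k j : 0 < q -> q <> 1 -> (0 < m)%nat -> (j < k)%nat ->
  cc q m (S k) (S j) = cc q m k j - (q ^ m) ^ k * cc q m k (S j).
Proof.
  intros Hq0 Hq1 Hm Hj.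
  assert (Hp0 : 0 < q ^ m) by (apply pow_lt; auto).
  assert (Hp1 : q ^ m <> 1) by (apply pow_ne1; auto).
  destruct (Nat.le_exists_sub (S j) k Hj) as [t [-> _]].
  unfold cc, qbinom. rewrite !pow_mult.
  replace (S (t + S j) - S j)%nat with (S t) by lia.
  replace (t + S j - j)%nat with (S t) by lia.
  replace (t + S j - S j)%nat with t by lia.
  rewrite choose2_S.
  set (p := q ^ m) in *. clearbody p.
  pose proof (qfact_nz p j Hp0 Hp1). pose proof (qfact_nz p t Hp0 Hp1).
  pose proof (qfact_nz p (t + S j) Hp0 Hp1).
  pose proof (pow_ne1 p (S t) Hp0 Hp1 ltac:(lia)).
  pose proof (pow_ne1 p (S j) Hp0 Hp1 ltac:(lia)).
  simpl qfact. unfold qint. simpl pow in *.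
  replace (p ^ (t + S j)) with (p ^ t * (p * p ^ j)) by (rewrite pow_add; simpl; ring). rewrite pow_add.
  generalize dependent (p ^ t); generalize dependent (p ^ j); intros.
  field. repeat split; lra.
Qed.

Definition ce q m k j := if (j <=? k)%nat then cc q m k j else 0.

Lemma ce_pascal q m k j : 0 < q -> q <> 1 -> (0 < m)%nat ->
  ce q m (S k) (S j) = ce q m k j - (q ^ m) ^ k * ce q m k (S j).
Proof.
  intros Hq0 Hq1 Hm. unfold ce.
  destruct (Nat.lt_trichotomy j k) as [H|[H|H]].
  - replace (S j <=? S k)%nat with true by (symmetry; apply Nat.leb_le; lia).
    replace (j <=? k)%nat with true by (symmetry; apply Nat.leb_le; lia).
    replace (S j <=? k)%nat with true by (symmetry; apply Nat.leb_le; lia).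
    apply cc_pascal; auto.
  - subst. rewrite !Nat.leb_refl.
    replace (S k <=? k)%nat with false by (symmetry; apply Nat.leb_gt; lia).
    rewrite !cc_diag by auto. ring.
  - replace (S j <=? S k)%nat with false by (symmetry; apply Nat.leb_gt; lia).
    replace (j <=? k)%nat with false by (symmetry; apply Nat.leb_gt; lia).
    replace (S j <=? k)%nat with false by (symmetry; apply Nat.leb_gt; lia).
    ring.
Qed.

Lemma rsum_ce_S q m k : 0 < q -> q <> 1 -> (0 < m)%nat ->
  rsum (ce q m (S k)) (S k) = (1 - (q ^ m) ^ k) * rsum (ce q m k) k.
Proof.
  intros Hq0 Hq1 Hm.
  rewrite rsum_shift.
  rewrite (rsum_ext _ (fun i => 1 * ce q m k i + (- (q ^ m) ^ k) * ce q m k (S i)))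
    by (intros; rewrite ce_pascal by auto; ring).
  rewrite rsum_lin.
  assert (ce q m (S k) 0 = - (q ^ m) ^ k * ce q m k 0) by
    (unfold ce; simpl; apply cc_S0; auto).
  assert (rsum (ce q m k) (S k) = rsum (ce q m k) k) as E.
  { simpl. unfold ce at 2. replace (S k <=? k)%nat with false
      by (symmetry; apply Nat.leb_gt; lia). ring. }
  rewrite rsum_shift in E. rewrite H. rewrite <- E. ring.
Qed.

Lemma rsum_cc_zero q m k : 0 < q -> q <> 1 -> (0 < m)%nat -> (0 < k)%nat ->
  rsum (cc q m k) k = 0.
Proof.
  intros Hq0 Hq1 Hm Hk.
  assert (forall k, (0 < k)%nat -> rsum (ce q m k) k = 0).
  { intros k0 Hk0. induction k0. lia. rewrite rsum_ce_S by auto.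
    destruct k0. simpl. ring. rewrite IHk0 by lia. ring. }
  rewrite <- (H k Hk). apply rsum_ext. intros. unfold ce.
  replace (j <=? k)%nat with true by (symmetry; apply Nat.leb_le; lia). auto.
Qed.

Definition XX q m r j := qbrC q (Cadd (RtoC (INR j * INR m)) r).

Lemma XX_eq q m r j : 0 < q -> q <> 1 ->
  XX q m r j = Cmul (RtoC (/ (1 - q)))
     (Csub (RtoC 1) (Cmul (RtoC ((q ^ m) ^ j)) (Cexpq q r))).
Proof.
  intros H0 H1. unfold XX. rewrite qbrC_eq by lra. rewrite Cexpq_add.
  rewrite <- mult_INR, exp_INR by auto. rewrite <- pow_mult, Nat.mul_comm. reflexivity.
Qed.

Lemma Wq_S q m r n k' : Wq q m r (S n) (S k') =
  Cadd (Cmul (Cexpq q (Cadd (RtoC (INR m * (INR (S k') - 1))) r)) (Wq q m r n k'))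
       (Cmul (qbrC q (Cadd (RtoC (INR m * INR (S k'))) r)) (Wq q m r n (S k'))).
Proof. reflexivity. Qed.
Lemma Wq_S0 q m r n : Wq q m r (S n) 0 =
  Cmul (qbrC q (Cadd (RtoC (INR m * INR 0)) r)) (Wq q m r n 0).
Proof. reflexivity. Qed.

Lemma DD_nz q m k : 0 < q -> q <> 1 -> (0 < m)%nat -> DD q m k <> 0.
Proof.
  intros Hq0 Hq1 Hm.
  assert (Hp0 : 0 < q ^ m) by (apply pow_lt; auto).
  assert (Hp1 : q ^ m <> 1) by (apply pow_ne1; auto).
  unfold DD. apply Rmult_integral_contrapositive; split. apply qfact_nz; auto.
  apply pow_nonzero. unfold qint, Rdiv.
  apply Rmult_integral_contrapositive; split. lra. apply Rinv_neq_0_compat; lra.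
Qed.

Lemma main q m r n : 0 < q -> q <> 1 -> (0 < m)%nat -> forall k,
  Wq q m r n k = Cmul (RtoC (/ DD q m k))
    (Csum (fun j => Cmul (RtoC (cc q m k j)) (Cpow (XX q m r j) n)) k).
Proof.
  intros Hq0 Hq1 Hm. induction n as [|n IH]; intros k.
  - destruct k as [|k'].
    + simpl. rewrite cc_diag by auto. unfold DD. simpl.
      rewrite Rmult_1_l, Rinv_1. ring.
    + simpl Wq. simpl Cpow.
      rewrite (Csum_ext _ (fun j => RtoC (cc q m (S k') j)))
        by (intros; rewrite <- RtoC_mul; f_equal; ring).
      rewrite Csum_RtoC, rsum_cc_zero by (auto; lia). ring.
  - destruct k as [|k'].
    + rewrite Wq_S0, IH. simpl Csum. simpl Cpow.
      replace (INR m * INR 0) with (INR 0 * INR m) by ring. fold (XX q m r 0). ring.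
    + rewrite Wq_S, !IH.
      replace (INR m * INR (S k')) with (INR (S k') * INR m) by ring.
      fold (XX q m r (S k')).
      rewrite Cexpq_add.
      replace (INR m * (INR (S k') - 1)) with (INR (m * k')) by (rewrite mult_INR, S_INR; ring).
      rewrite exp_INR, pow_mult by auto.
      set (A := Cexpq q r).
      set (Xk := XX q m r (S k')).
      set (D := DD q m (S k')). set (D' := DD q m k').
      set (pk := (q ^ m) ^ k').
      set (S' := Csum (fun j => Cmul (RtoC (cc q m k' j)) (Cpow (XX q m r j) n)) k').
      set (S0 := Csum (fun j => Cmul (RtoC (cc q m (S k') j)) (Cpow (XX q m r j) n)) (S k')).
      simpl Cpow.
      rewrite (Csum_ext _ (fun j => Cadd (Cmul Xk (Cmul (RtoC (cc q m (S k') j)) (Cpow (XX q m r j) n)))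
                    (Cmul (RtoC (cc q m (S k') j)) (Cmul (Csub (XX q m r j) Xk) (Cpow (XX q m r j) n)))))
        by (intros; unfold Csub; ring).
      rewrite Csum_add, Csum_scal. fold S0.
      change (Csum ?f (S k')) with (Cadd (Csum f k') (f (S k'))). cbv beta.
      fold Xk.
      rewrite (Csum_ext _ (fun j => Cmul (RtoC D) (Cmul (RtoC pk) (Cmul A (Cmul (RtoC (/ D'))
                  (Cmul (RtoC (cc q m k' j)) (Cpow (XX q m r j) n))))))).
      2:{ intros j Hj.
          unfold Xk. rewrite !XX_eq by auto. fold A.
          set (Y := Cpow _ n).
          transitivity (Cmul (RtoC (cc q m (S k') j * / (1 - q) * ((q ^ m) ^ (S k') - (q ^ m) ^ j))) (Cmul A Y)).
          { rewrite !RtoC_mul, RtoC_sub. unfold Csub. ring. }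
          rewrite rec_real by auto.
          rewrite !RtoC_mul. fold D D' pk. ring. }
      rewrite !Csum_scal. fold S'.
      assert (Cmul (RtoC (/ D)) (RtoC D) = RtoC 1).
      { rewrite <- RtoC_mul, Rinv_l. reflexivity. apply DD_nz; auto. }
      transitivity (Cadd (Cmul Xk (Cmul (RtoC (/ D)) S0))
                 (Cmul (Cmul (RtoC (/ D)) (RtoC D)) (Cmul (RtoC pk) (Cmul A (Cmul (RtoC (/ D')) S'))))).
      { rewrite H. ring. }
      unfold Csub. ring.
Qed.

Theorem theorem4 (q : R) (m : nat) (r : Cx) (k : nat) :
  0 < q -> q <> 1 -> (0 < m)%nat ->
  forall n : nat,
    Cdiv (Wq q m r n k) (RtoC (qfact q n)) =
    Cmul (RtoC (1 / (qfact (q ^ m) k * (qint q m) ^ k)))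
      (Csum (fun j =>
         Cmul (RtoC ((-1) ^ (k - j) * q ^ (m * choose2 (k - j))
                     * qbinom (q ^ m) k j))
              (Cdiv (Cpow (qbrC q (Cadd (RtoC (INR j * INR m)) r)) n)
                    (RtoC (qfact q n)))) k).
Proof.
  intros Hq0 Hq1 Hm n.
  pose proof (qfact_nz q n Hq0 Hq1) as HF.
  rewrite Cdiv_real by auto.
  rewrite (Csum_ext _ (fun j => Cmul (RtoC (/ qfact q n))
     (Cmul (RtoC (cc q m k j)) (Cpow (XX q m r j) n)))).
  2:{ intros. cbv beta. rewrite Cdiv_real by auto. unfold cc, XX. ring. }
  rewrite (main q m r n Hq0 Hq1 Hm k).
  rewrite Csum_scal. unfold Rdiv. rewrite Rmult_1_l. fold (DD q m k). ring.
Qed.
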